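(* Let $N\ge1$ be an integer, $0<\delta,f\le1$, and let $\Omega$ be a positive-definite verification operator for $|\Psi\rangle$ with second largest eigenvalue $\beta$ and smallest eigenvalue $\tau$, $0<\tau\le\beta<1$. Let $h=[\min\{\beta\ln\beta^{-1},\tau\ln\tau^{-1}\}]^{-1}$. Then $$F(N,\delta,\Omega)\ge\frac{N+1-(\ln\beta)^{-1}\ln(\tau\delta)}{N+1-(\ln\beta)^{-1}\ln(\tau\delta)-h\ln(\tau\delta)},\qquad \mathcal F(N,f,\Omega)\ge\frac{N+1-(\ln\beta)^{-1}\ln f}{N+1-(\ln\beta)^{-1}\ln f-h\ln f}.$$
   Context: Let $\mathcal H$ be a Hilbert space of finite dimension $D\ge2$ and $|\Psi\rangle\in\mathcal H$ a unit vector. A verification operator for $|\Psi\rangle$ is a Hermitian operator $\Omega$ on $\mathcal H$ with $0\le\Omega\le1$, $\Omega|\Psi\rangle=|\Psi\rangle$, whose eigenvalue $1$ is nondegenerate. For a density operator $\rho$ on $\mathcal H^{\otimes(N+1)}$ put $p_\rho=\mathrm{tr}[(\Omega^{\otimes N}\otimes1)\rho]$, $f_\rho=\mathrm{tr}[(\Omega^{\otimes N}\otimes|\Psi\rangle\langle\Psi|)\rho]$. With minimization over permutation-invariant density operators on $\mathcal H^{\otimes(N+1)}$: $F(N,\delta,\Omega)=\min\{f_\rho/p_\rho:p_\rho\ge\delta\}$ and $\mathcal F(N,f,\Omega)=\min\{f_\rho/p_\rho:f_\rho\ge f\}$. *)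

(* Defs.v *)
From HB Require Import structures.
From mathcomp Require Import all_boot all_order all_algebra fingroup perm.
From mathcomp Require Import boolp classical_sets reals exp.
From mathcomp.real_closed Require Import complex.
Set Implicit Arguments. Unset Strict Implicit. Unset Printing Implicit Defensive.
Import Order.TTheory GRing.Theory Num.Theory.
Local Open Scope ring_scope.
Local Open Scope classical_set_scope.

Section Defs.
Variable R : realType.
Local Notation C := (R[i]).

Definition hadj m n (A : 'M[C]_(m, n)) : 'M[C]_(n, m) := map_mx Num.conj A^T.

Definition hermitian n (A : 'M[C]_n) : Prop := hadj A = A.

Definition psd n (A : 'M[C]_n) : Prop :=
  hermitian A /\ forall v : 'cV[C]_n, 0 <= (hadj v *m A *m v) 0 0.

Definition posdef n (A : 'M[C]_n) : Prop :=
  hermitian A /\ forall v : 'cV[C]_n, v != 0 -> 0 < (hadj v *m A *m v) 0 0.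

Definition unit_vector n (psi : 'cV[C]_n) : Prop := (hadj psi *m psi) 0 0 = 1.

Definition verification_op n (psi : 'cV[C]_n) (Om : 'M[C]_n) : Prop :=
  [/\ hermitian Om, psd Om, psd (1%:M - Om), Om *m psi = psi
    & \rank (eigenspace Om 1) = 1%N].

(* H^{(x)(N+1)}: product basis indexed by functions 'I_(N+1) -> 'I_D;
   operators on it are kernels idx -> idx -> C (matrix entries). *)
Definition idx (N D : nat) := {ffun 'I_N.+1 -> 'I_D}.
Definition mop (N D : nat) := idx N D -> idx N D -> C.

Definition tens_op N D (A : 'I_N.+1 -> 'M[C]_D) : mop N D :=
  fun i j => \prod_(k < N.+1) A k (i k) (j k).

Definition OmN_id N D (Om : 'M[C]_D) : mop N D :=
  tens_op (fun k : 'I_N.+1 => if (k < N)%N then Om else 1%:M).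

Definition OmN_psi N D (Om : 'M[C]_D) (psi : 'cV[C]_D) : mop N D :=
  tens_op (fun k : 'I_N.+1 => if (k < N)%N then Om else psi *m hadj psi).

Definition trace_mul N D (A rho : mop N D) : C :=
  \sum_(i : idx N D) \sum_(j : idx N D) A i j * rho j i.

Definition density_op N D (rho : mop N D) : Prop :=
  [/\ (forall i j, rho j i = (rho i j)^*),
      (forall v : idx N D -> C,
          0 <= \sum_(i : idx N D) \sum_(j : idx N D) (v i)^* * rho i j * v j)
    & \sum_(i : idx N D) rho i i = 1].

(* invariance under all permutations of the N+1 tensor factors:
   P_s rho P_s^dagger = rho for every s in S_(N+1) *)
Definition perm_invariant N D (rho : mop N D) : Prop :=
  forall (s : 'S_N.+1) (i j : idx N D),
    rho [ffun k => i (s k)] [ffun k => j (s k)] = rho i j.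

(* p_rho and f_rho (real numbers; the traces are real) *)
Definition p_of N D (Om : 'M[C]_D) (rho : mop N D) : R :=
  complex.Re (trace_mul (@OmN_id N D Om) rho).
Definition f_of N D (Om : 'M[C]_D) (psi : 'cV[C]_D) (rho : mop N D) : R :=
  complex.Re (trace_mul (@OmN_psi N D Om psi) rho).

Definition Fdelta N D (delta : R) (Om : 'M[C]_D) (psi : 'cV[C]_D) : R :=
  inf [set r : R | exists rho : mop N D,
         [/\ density_op rho, perm_invariant rho, delta <= p_of Om rho
           & r = f_of Om psi rho / p_of Om rho]].

Definition Ffid N D (fmin : R) (Om : 'M[C]_D) (psi : 'cV[C]_D) : R :=
  inf [set r : R | exists rho : mop N D,
         [/\ density_op rho, perm_invariant rho, fmin <= f_of Om psi rho
           & r = f_of Om psi rho / p_of Om rho]].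

End Defs.

(* Main.v *)
Require Import Defs.
From HB Require Import structures.
From mathcomp Require Import all_boot all_order all_algebra fingroup perm.
From mathcomp Require Import boolp classical_sets reals exp.
From mathcomp.real_closed Require Import complex.
From mathcomp Require Import spectral sesquilinear.
From mathcomp.algebra_tactics Require Import ring lra.
Set Implicit Arguments. Unset Strict Implicit. Unset Printing Implicit Defensive.
Import Order.TTheory GRing.Theory Num.Theory.
Local Open Scope ring_scope.

Section RealFacts.
Variable R : realType.

Lemma ln_le_sub1 {z : R} : 0 < z -> ln z <= z - 1.
Proof.
move=> z0; have := expR_ge1Dx (ln z); rewrite lnK ?posrE //; lra.
Qed.

(* tangent line of -z ln z at m *)
Lemma tangent_ln {z m : R} : 0 < z -> 0 < m -> z * ln z >= z * ln m + z - m.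
Proof.
move=> z0 m0; have := ln_le_sub1 (divr_gt0 m0 z0).
rewrite ln_div ?posrE // => H.
have : z * (ln m - ln z) <= z * (m / z - 1) by rewrite ler_pM2l.
rewrite mulrBr mulrBr mulr1 mulrCA divff ?gt_eqF // mulr1; lra.
Qed.

Lemma lnV' (x : R) : 0 < x -> ln x^-1 = - ln x.
Proof. by move=> x0; rewrite lnV ?posrE. Qed.

Lemma min_ent (tau beta mu : R) : 0 < tau -> tau <= mu -> mu <= beta ->
  Order.min (beta * ln beta^-1) (tau * ln tau^-1) <= mu * ln mu^-1.
Proof.
move=> t0 tm mb.
have m0 : 0 < mu by exact: (lt_le_trans t0 tm).
have b0 : 0 < beta by exact: (lt_le_trans m0 mb).
rewrite !lnV' //.
have H1 := tangent_ln t0 m0.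
have H2 := tangent_ln b0 m0.
set u := Order.min _ _.
have u1 : u <= beta * - ln beta by rewrite /u ge_min lexx.
have u2 : u <= tau * - ln tau by rewrite /u ge_min lexx orbT.
have K : (beta - tau) * u <= (beta - tau) * (mu * - ln mu).
  have e1 : (beta - mu) * u <= (beta - mu) * (tau * - ln tau).
    by rewrite ler_wpM2l // subr_ge0.
  have e2 : (mu - tau) * u <= (mu - tau) * (beta * - ln beta).
    by rewrite ler_wpM2l // subr_ge0.
  have e3 : (beta - mu) * (tau * ln tau) >= (beta - mu) * (tau * ln mu + tau - mu).
    by rewrite ler_wpM2l // subr_ge0.
  have e4 : (mu - tau) * (beta * ln beta) >= (mu - tau) * (beta * ln mu + beta - mu).
    by rewrite ler_wpM2l // subr_ge0.
  nra.
have [/eqP bt|bt] := boolP (beta == tau).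
  have -> : mu = beta by apply/le_anti; rewrite mb /= bt tm.
  by rewrite /u ge_min lexx.
have : 0 < beta - tau by rewrite subr_gt0 lt_neqAle eq_sym bt (le_trans tm mb).
move=> btp; by rewrite ler_pM2l in K.
Qed.

End RealFacts.

Definition swapx N D (s : 'S_N.+1) (x : {ffun 'I_N.+1 -> 'I_D}) :
  {ffun 'I_N.+1 -> 'I_D} := [ffun k => x (s k)].

Lemma swapx_inj N D s : injective (@swapx N D s).
Proof.
move=> x y /ffunP H; apply/ffunP => k.
have := H (s^-1 k)%g; by rewrite !ffunE permKV.
Qed.

Lemma sum_swapx (V : nmodType) N D (s : 'S_N.+1) (F : {ffun 'I_N.+1 -> 'I_D} -> V) :
  \sum_(x : {ffun 'I_N.+1 -> 'I_D}) F x = \sum_(x : {ffun 'I_N.+1 -> 'I_D}) F (swapx s x).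
Proof. exact: (reindex_inj (@swapx_inj N D s)). Qed.

Lemma prod_perm (V : comPzSemiRingType) n (s : 'S_n) (F : 'I_n -> V) :
  \prod_k F (s k) = \prod_k F k.
Proof. by rewrite [RHS](reindex_inj (@perm_inj _ s)). Qed.

Section Classical.
Variable R : realType.
Variables (N D : nat).
Local Notation I := {ffun 'I_N.+1 -> 'I_D}.
Variables (q : I -> R) (d : 'I_D -> R) (a0 : 'I_D) (tau beta : R).
Hypothesis q0 : forall x, 0 <= q x.
Hypothesis qsum : \sum_x q x = 1.
Hypothesis qsym : forall s x, q (swapx s x) = q x.
Hypothesis d0 : d a0 = 1.
Hypothesis dbad : forall a, a != a0 -> tau <= d a /\ d a <= beta.
Hypothesis tau0 : 0 < tau.
Hypothesis taub : tau <= beta.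
Hypothesis beta1 : beta < 1.

Lemma dpos a : 0 < d a.
Proof.
have [->|/dbad [H _]] := eqVneq a a0; first by rewrite d0.
exact: lt_le_trans tau0 H.
Qed.

Lemma dle1 a : d a <= 1.
Proof.
have [->|/dbad [_ H]] := eqVneq a a0; first by rewrite d0.
by apply: le_trans H (ltW beta1).
Qed.

Lemma dge_tau a : tau <= d a.
Proof.
have [->|/dbad [H _]] := eqVneq a a0 => //.
by rewrite d0 (le_trans taub (ltW beta1)).
Qed.

Definition lam (x : I) := \prod_k d (x k).
Definition Wg (g : 'I_D -> R) (x : I) :=
  \prod_(k < N.+1) (if (k < N)%N then d (x k) else g (x k)).

Lemma lam_gt0 x : 0 < lam x.
Proof. by apply: prodr_gt0 => k _; apply: dpos. Qed.

Lemma lam_le1 x : lam x <= 1.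
Proof.
apply: prodr_ile1 => k _; by rewrite ltW ?dpos ?dle1.
Qed.

Lemma Wg_lam g x : Wg g x = lam x / d (x ord_max) * g (x ord_max).
Proof.
rewrite /Wg /lam !big_ord_recr /= ltnn.
rewrite mulfK ?gt_eqF ?dpos //.
congr (_ * _); apply: eq_bigr => k _; by rewrite ltn_ord.
Qed.

Lemma lam_swap s x : lam (swapx s x) = lam x.
Proof.
rewrite /lam /swapx; under eq_bigr do rewrite ffunE.
exact: (prod_perm s (fun k => d (x k))).
Qed.

Definition MR : R := N.+1%:R.

Lemma symmetrize (H : 'I_D -> R -> R) :
  \sum_x q x * H (x ord_max) (lam x) =
  \sum_x q x * (MR^-1 * \sum_j H (x j) (lam x)).
Proof.
have E j : \sum_x q x * H (x ord_max) (lam x) = \sum_x q x * H (x j) (lam x).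
  rewrite (sum_swapx (tperm j ord_max)); apply: eq_bigr => x _.
  by rewrite qsym lam_swap /swapx ffunE tpermR.
have : MR * \sum_x q x * H (x ord_max) (lam x) =
       \sum_x q x * (\sum_j H (x j) (lam x)).
  have -> : MR = \sum_(j < N.+1) 1 by rewrite sumr_const card_ord.
  rewrite big_distrl /=.
  under eq_bigr => j _ do rewrite mul1r (E j).
  rewrite exchange_big /=; apply: eq_bigr => x _; by rewrite mulr_sumr.
move=> H1; rewrite -[LHS]mul1r -(@mulVf _ MR) ?pnatr_eq0 // -mulrA H1.
rewrite mulr_sumr; apply: eq_bigr => x _; ring.
Qed.

Lemma ln_prod (J : finType) (F : J -> R) : (forall j, 0 < F j) ->
  ln (\prod_j F j) = \sum_j ln (F j).
Proof.
move=> Fp.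
pose K := fun a b : R => 0 < a /\ ln a = b.
suff [] : K (\prod_j F j) (\sum_j ln (F j)) by [].
apply: big_rec2; first by split; rewrite ?ltr01 ?ln1.
move=> j y1 y2 _ [y0 <-]; split; first by rewrite mulr_gt0.
by rewrite lnM ?posrE.
Qed.

Definition mm := \sum_x q x * lam x.

Lemma mm_gt0 : 0 < mm.
Proof.
have nn x : true -> 0 <= q x * lam x by move=> _; rewrite mulr_ge0 ?q0 ?ltW ?lam_gt0.
rewrite lt_neqAle sumr_ge0 // andbT eq_sym; apply/negP.
move/eqP/(psumr_eq0P nn) => H.
have : \sum_(x : I) q x = 0.
  apply: big1 => x _; move: (H x isT) => /eqP; rewrite mulf_eq0 => /orP[/eqP //|].
  by rewrite gt_eqF ?lam_gt0.
by rewrite qsum => /eqP; rewrite oner_eq0.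
Qed.

Lemma mm_le1 : mm <= 1.
Proof.
rewrite -qsum /mm; apply: ler_sum => x _.
by rewrite -{2}[q x]mulr1 ler_wpM2l ?q0 ?lam_le1.
Qed.

Lemma jensen : mm * ln mm <= \sum_x q x * (lam x * ln (lam x)).
Proof.
have H x : q x * (lam x * ln mm + lam x - mm) <= q x * (lam x * ln (lam x)).
  by rewrite ler_wpM2l ?q0 // tangent_ln ?lam_gt0 ?mm_gt0.
apply: le_trans (ler_sum _ (fun x _ => H x)).
rewrite (eq_bigr (fun x => (q x * lam x) * (ln mm + 1) - mm * q x)); last by move=> x _; ring.
rewrite sumrB -mulr_suml -mulr_sumr qsum -/mm; lra.
Qed.


Lemma MR_gt0 : 0 < MR.
Proof. by rewrite /MR ltr0n. Qed.

Lemma sym_Wg g : \sum_x q x * Wg g x =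
  \sum_x q x * (MR^-1 * \sum_j (lam x / d (x j) * g (x j))).
Proof.
under eq_bigr do rewrite Wg_lam.
exact: (symmetrize (fun a y => y / d a * g a)).
Qed.

Definition Pv := \sum_x q x * Wg (fun _ => 1) x.
Definition Fv := \sum_x q x * Wg (fun a => (a == a0)%:R) x.

Lemma termP a y : 0 <= y -> y / d a * 1 <= y / tau.
Proof.
move=> y0; rewrite mulr1 ler_wpM2l // lef_pV2 ?posrE ?dpos ?dge_tau //.
Qed.

Lemma termF2 a y : 0 <= y -> y / d a * (a == a0)%:R <= y.
Proof.
move=> y0; have [->|_] := eqVneq a a0; last by rewrite mulr0.
by rewrite d0 invr1 !mulr1.
Qed.

Lemma Pv_le : tau * Pv <= mm.
Proof.
rewrite /Pv sym_Wg mulr_sumr /mm; apply: ler_sum => x _.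
rewrite mulrCA ler_wpM2l ?q0 //.
have H : \sum_j (lam x / d (x j) * 1) <= \sum_(j < N.+1) (lam x / tau).
  by apply: ler_sum => j _; rewrite termP // ltW ?lam_gt0.
rewrite sumr_const card_ord -/MR in H.
have Hm : MR^-1 * (\sum_j (lam x / d (x j) * 1)) <= MR^-1 * ((lam x / tau) *+ N.+1).
  by rewrite ler_wpM2l // invr_ge0 ltW ?MR_gt0.
apply: le_trans (ler_wpM2l (ltW tau0) Hm) _.
rewrite -mulr_natr -/MR.
have e1 : MR^-1 * MR = 1 by rewrite mulVf // gt_eqF ?MR_gt0.
have e2 : tau / tau = 1 by rewrite divff // gt_eqF.
rewrite [X in X <= _](_ : _ = lam x * (MR^-1 * MR) * (tau / tau)); last by ring.
by rewrite e1 e2 !mulr1.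
Qed.

Lemma Fv_le : Fv <= mm.
Proof.
rewrite /Fv sym_Wg /mm; apply: ler_sum => x _.
rewrite ler_wpM2l ?q0 //.
have H : \sum_j (lam x / d (x j) * (x j == a0)%:R) <= \sum_(j < N.+1) lam x.
  by apply: ler_sum => j _; rewrite termF2 // ltW ?lam_gt0.
rewrite sumr_const card_ord in H.
have MRi : 0 < MR^-1 by rewrite invr_gt0 MR_gt0.
have Hm := ler_wpM2l (ltW MRi) H.
apply: le_trans Hm _.
rewrite -mulr_natr -/MR.
have e1 : MR^-1 * MR = 1 by rewrite mulVf // gt_eqF ?MR_gt0.
by rewrite mulrCA e1 mulr1.
Qed.


Definition hh := (Order.min (beta * ln beta^-1) (tau * ln tau^-1))^-1.

Lemma beta0 : 0 < beta. Proof. exact: lt_le_trans tau0 taub. Qed.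
Lemma lb_lt0 : ln beta < 0. Proof. by rewrite ln_lt0 // beta0 beta1. Qed.

Lemma m0_gt0 : 0 < Order.min (beta * ln beta^-1) (tau * ln tau^-1).
Proof.
have t1 : tau < 1 by exact: le_lt_trans taub beta1.
rewrite lt_min !mulr_gt0 ?beta0 // !lnV' ?beta0 // oppr_gt0.
  by rewrite ln_lt0 // tau0 t1.
exact: lb_lt0.
Qed.

Lemma hh_gt0 : 0 < hh. Proof. by rewrite /hh invr_gt0 m0_gt0. Qed.

Lemma termF a y : 0 < y -> y * (1 - (ln beta)^-1 * ln (d a)) <= y / d a * (a == a0)%:R.
Proof.
move=> y0; have [->|na] := eqVneq a a0.
  by rewrite d0 ln1 mulr0 subr0 invr1 !mulr1.
rewrite mulr0; apply: mulr_ge0_le0; first exact: ltW.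
have [ta ab] := dbad na.
have : ln (d a) <= ln beta by rewrite ler_ln ?posrE ?dpos ?beta0.
have lb := lb_lt0.
have e : (ln beta)^-1 * ln beta = 1 by rewrite mulVf ?lt_eqF.
have vi : (ln beta)^-1 < 0 by rewrite invr_lt0.
move=> Hl.
have : 0 <= (ln beta)^-1 * (ln (d a) - ln beta).
  by apply: mulr_le0; [exact: ltW | rewrite subr_le0].
rewrite mulrBr e subr_ge0 subr_le0; exact.
Qed.

Lemma termB a y : 0 < y -> y / d a * (1 - (a == a0)%:R) <= hh * (y * - ln (d a)).
Proof.
move=> y0; have [->|na] := eqVneq a a0.
  by rewrite d0 ln1 subrr oppr0 !mulr0.
rewrite subr0 mulr1.
have [ta ab] := dbad na.
have := @min_ent R tau beta (d a) tau0 ta ab; rewrite (@lnV' R (d a) (dpos a)) => Hm.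
have dp := dpos a.
have e : (d a)^-1 * d a = 1 by rewrite mulVf ?gt_eqF.
have mp := m0_gt0.
have e2 : hh * Order.min (beta * ln beta^-1) (tau * ln tau^-1) = 1 by rewrite /hh mulVf ?gt_eqF.
have hp := hh_gt0.
have ip : 0 < (d a)^-1 by rewrite invr_gt0.
rewrite [X in _ <= X]mulrCA; apply: ler_wpM2l; first exact: ltW.
have : hh * Order.min (beta * ln beta^-1) (tau * ln tau^-1) <= hh * (d a * - ln (d a)).
  by apply: ler_wpM2l; [exact: ltW | exact: Hm].
rewrite e2 => H1.
have : (d a)^-1 * 1 <= (d a)^-1 * (hh * (d a * - ln (d a))) by apply: ler_wpM2l; [exact: ltW | exact: H1].
rewrite mulr1 => H2; apply: le_trans H2 _.
by rewrite mulrCA (mulrA (d a)^-1) e mul1r.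
Qed.


Definition JJ := \sum_x q x * (lam x * ln (lam x)).

Lemma MRK : MR^-1 * MR = 1.
Proof. by rewrite mulVf // gt_eqF ?MR_gt0. Qed.

Lemma ln_lam x : ln (lam x) = \sum_j ln (d (x j)).
Proof. by rewrite /lam ln_prod // => j; apply: dpos. Qed.

Lemma Fv_ge : mm - MR^-1 * (ln beta)^-1 * JJ <= Fv.
Proof.
rewrite /Fv sym_Wg /mm /JJ mulr_sumr -sumrB; apply: ler_sum => x _.
have H : lam x * (MR - (ln beta)^-1 * ln (lam x)) <=
         \sum_j (lam x / d (x j) * (x j == a0)%:R).
  have -> : lam x * (MR - (ln beta)^-1 * ln (lam x)) =
            \sum_j (lam x * (1 - (ln beta)^-1 * ln (d (x j)))).
    rewrite -mulr_sumr sumrB sumr_const card_ord -/MR -mulr_sumr ln_lam.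
    by [].
  by apply: ler_sum => j _; apply: termF; apply: lam_gt0.
have MRi : 0 <= MR^-1 by rewrite invr_ge0 ltW ?MR_gt0.
have H2 := ler_wpM2l (q0 x) (ler_wpM2l MRi H).
apply: le_trans H2.
have e := MRK.
rewrite [X in _ <= X](_ : _ = q x * lam x * (MR^-1 * MR)
   - MR^-1 * (ln beta)^-1 * (q x * (lam x * ln (lam x)))); last by ring.
by rewrite e mulr1.
Qed.

Lemma PFdiff : Pv - Fv =
  \sum_x q x * (MR^-1 * \sum_j (lam x / d (x j) * (1 - (x j == a0)%:R))).
Proof.
rewrite /Pv /Fv !sym_Wg -sumrB; apply: eq_bigr => x _.
rewrite -mulrBr -mulrBr -sumrB; congr (_ * (_ * _)); apply: eq_bigr => j _.
by rewrite mulrBr.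
Qed.

Lemma B_le : Pv - Fv <= - (MR^-1 * hh) * JJ.
Proof.
rewrite PFdiff /JJ mulr_sumr; apply: ler_sum => x _.
have H : \sum_j (lam x / d (x j) * (1 - (x j == a0)%:R)) <=
         hh * (lam x * - ln (lam x)).
  rewrite ln_lam -sumrN !mulr_sumr.
  by apply: ler_sum => j _; apply: termB; apply: lam_gt0.
have MRi : 0 <= MR^-1 by rewrite invr_ge0 ltW ?MR_gt0.
have H2 := ler_wpM2l (q0 x) (ler_wpM2l MRi H).
apply: le_trans H2 _.
by rewrite [X in _ <= X](_ : _ = q x * (MR^-1 * (hh * (lam x * - ln (lam x))))); last by ring.
Qed.

Lemma B_ge0 : 0 <= Pv - Fv.
Proof.
rewrite PFdiff; apply: sumr_ge0 => x _; apply: mulr_ge0; first exact: q0.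
apply: mulr_ge0; first by rewrite invr_ge0 ltW ?MR_gt0.
apply: sumr_ge0 => j _; apply: mulr_ge0.
  by rewrite divr_ge0 ?ltW ?lam_gt0 ?dpos.
by case: (_ == _); rewrite ?subrr ?subr0.
Qed.

Lemma Fv_ge0 : 0 <= Fv.
Proof.
rewrite /Fv sym_Wg; apply: sumr_ge0 => x _; apply: mulr_ge0; first exact: q0.
apply: mulr_ge0; first by rewrite invr_ge0 ltW ?MR_gt0.
apply: sumr_ge0 => j _; apply: mulr_ge0.
  by rewrite divr_ge0 ?ltW ?lam_gt0 ?dpos.
by rewrite ler0n.
Qed.

Lemma classical_bound c : 0 < c -> c <= mm ->
  (MR - (ln beta)^-1 * ln c) / (MR - (ln beta)^-1 * ln c - hh * ln c) <= Fv / Pv.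
Proof.
move=> c0 cm.
set X := MR - (ln beta)^-1 * ln c.
have lc : ln c <= 0 by rewrite ln_le0 // (le_trans cm mm_le1).
have lb := lb_lt0.
have vi : (ln beta)^-1 < 0 by rewrite invr_lt0.
have ev : (ln beta)^-1 * ln beta = 1 by rewrite mulVf ?lt_eqF.
have hp := hh_gt0.
have mp := m0_gt0.
have eh : hh * Order.min (beta * ln beta^-1) (tau * ln tau^-1) = 1 by rewrite /hh mulVf ?gt_eqF.
have hb : 1 <= hh * - ln beta.
  have : Order.min (beta * ln beta^-1) (tau * ln tau^-1) <= - ln beta.
    rewrite ge_min; apply/orP; left; rewrite lnV' ?beta0 //.
    rewrite -[X in _ <= X]mul1r ler_wpM2r ?oppr_ge0 ?ltW ?beta1 //.
  move=> Hm; apply: le_trans (ler_wpM2l (ltW hp) Hm); by rewrite eh.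
have vb : - (ln beta)^-1 <= hh.
  have : (- (ln beta)^-1) * 1 <= (- (ln beta)^-1) * (hh * - ln beta).
    by apply: ler_wpM2l; [rewrite oppr_ge0 ltW | exact: hb].
  rewrite mulr1 (_ : - (ln beta)^-1 * (hh * - ln beta) = hh * ((ln beta)^-1 * ln beta)); last by ring.
  by rewrite ev mulr1.
have den : 0 < X - hh * ln c.
  rewrite /X.
  have : 0 <= (hh + (ln beta)^-1) * (- ln c).
    by apply: mulr_ge0; [rewrite -(opprK (ln beta)^-1) subr_ge0 | rewrite oppr_ge0].
  have := MR_gt0. nra.
have F0 := Fv_ge0.
have B0 := B_ge0.
have [Xle|Xgt] := leP X 0.
  apply: le_trans (_ : 0 <= _).
    by rewrite pmulr_lle0 ?invr_gt0.
  by apply: divr_ge0 => //; lra.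
have Jm : mm * ln c <= JJ.
  apply: le_trans jensen; apply: ler_wpM2l; first exact: ltW mm_gt0.
  by rewrite ler_ln ?posrE ?mm_gt0.
have u0 : 0 < MR^-1 by rewrite invr_gt0 MR_gt0.
have e1 := MRK.
have Fl := Fv_ge.
have Bl := B_le.
have FX : mm * MR^-1 * X <= Fv.
  apply: le_trans Fl.
  have : MR^-1 * (ln beta)^-1 * JJ <= MR^-1 * (ln beta)^-1 * (mm * ln c).
    have H0 : (ln beta)^-1 * JJ <= (ln beta)^-1 * (mm * ln c) by rewrite ler_nM2l.
    by rewrite -!mulrA; apply: ler_wpM2l; [exact: ltW | exact: H0].
  rewrite /X; move=> H.
  have -> : mm * MR^-1 * (MR - (ln beta)^-1 * ln c) =
            mm * (MR^-1 * MR) - MR^-1 * (ln beta)^-1 * (mm * ln c) by ring.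
  by rewrite e1 mulr1 lerD2l lerN2.
have BX : Pv - Fv <= - (MR^-1 * hh) * (mm * ln c).
  apply: le_trans Bl _.
  by rewrite !mulNr lerN2 ler_wpM2l // mulr_ge0 ?ltW.
have Pp : 0 < Pv.
  have : 0 < mm * MR^-1 * X by rewrite !mulr_gt0 ?mm_gt0.
  move=> H; apply: (lt_le_trans H); apply: (le_trans FX); by rewrite -subr_ge0.
rewrite ler_pdivrMr // mulrAC ler_pdivlMr //.
have K1 : X * (Pv - Fv) <= X * (- (MR^-1 * hh) * (mm * ln c)).
  by apply: ler_wpM2l; [exact: ltW | exact: BX].
have K2 : (mm * MR^-1 * X) * (- hh * ln c) <= Fv * (- hh * ln c).
  apply: ler_wpM2r; last exact: FX.
  by rewrite mulNr oppr_ge0 pmulr_rle0.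
have E1 : X * (- (MR^-1 * hh) * (mm * ln c)) = (mm * MR^-1 * X) * (- hh * ln c) by ring.
rewrite E1 in K1.
have -> : Fv * (X - hh * ln c) = X * Fv + Fv * (- hh * ln c) by ring.
have -> : X * Pv = X * Fv + X * (Pv - Fv) by ring.
rewrite lerD2l; exact: le_trans K1 K2.
Qed.

End Classical.

Section Quantum.
Variable R : realType.
Local Notation C := (R[i]).
Variable D : nat.
Variable P : 'M[C]_D.
Hypothesis U1 : P *m hadj P = 1%:M.
Hypothesis U2 : hadj P *m P = 1%:M.

Lemma hadjE m n (A : 'M[C]_(m, n)) i j : hadj A i j = Num.conj (A j i).
Proof. by rewrite !mxE. Qed.

Lemma U1E a b : \sum_k P a k * Num.conj (P b k) = (a == b)%:R.
Proof.
have := congr1 (fun M : 'M[C]_D => M a b) U1; rewrite !mxE => <-.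
by apply: eq_bigr => k _; rewrite hadjE.
Qed.

Lemma U2E i j : \sum_a Num.conj (P a i) * P a j = (i == j)%:R.
Proof.
have := congr1 (fun M : 'M[C]_D => M i j) U2; rewrite !mxE => <-.
by apply: eq_bigr => k _; rewrite hadjE.
Qed.

Section Expand.
Variable N : nat.
Local Notation I := (idx N D).

Definition EE (x i : I) : C := \prod_k P (x k) (i k).
Definition qc (rho : mop R N D) (x : I) : C :=
  \sum_i \sum_j EE x i * rho i j * Num.conj (EE x j).

Lemma tens_expand (A : 'I_N.+1 -> 'M[C]_D) (w : 'I_N.+1 -> 'I_D -> C)
  (HA : forall k i j, A k i j = \sum_a w k a * (Num.conj (P a i) * P a j))
  (rho : mop R N D) :
  trace_mul (tens_op A) rho = \sum_(x : I) (\prod_k w k (x k)) * qc rho x.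
Proof.
have T i j : tens_op A i j =
    \sum_(x : I) (\prod_k w k (x k)) * (Num.conj (EE x i) * EE x j).
  rewrite /tens_op.
  rewrite (eq_bigr (fun k => \sum_a w k a * (Num.conj (P a (i k)) * P a (j k))));
    last by move=> k _; rewrite HA.
  rewrite bigA_distr_bigA /=; apply: eq_bigr => x _.
  by rewrite /EE rmorph_prod -!big_split.
rewrite /trace_mul.
rewrite (eq_bigr (fun i => \sum_j \sum_(x : I)
    (\prod_k w k (x k)) * (Num.conj (EE x i) * EE x j) * rho j i)); last first.
  move=> i _; apply: eq_bigr => j _; by rewrite T mulr_suml.
rewrite (eq_bigr (fun i => \sum_(x : I) \sum_j
    (\prod_k w k (x k)) * (Num.conj (EE x i) * EE x j) * rho j i)); last first.
  by move=> i _; rewrite exchange_big.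
rewrite exchange_big /=; apply: eq_bigr => x _.
rewrite /qc mulr_sumr exchange_big /=; apply: eq_bigr => j _.
rewrite mulr_sumr; apply: eq_bigr => i _.
ring.
Qed.


Lemma prod_eq (x y : I) : \prod_k ((x k == y k)%:R : C) = (x == y)%:R.
Proof.
have [->|nxy] := eqVneq x y.
  by rewrite big1 // => k _; rewrite eqxx.
have [k hk] : exists k, x k != y k.
  apply/existsP; apply: contraT; rewrite negb_exists => /forallP H.
  move: nxy; rewrite (_ : x = y) ?eqxx //; apply/ffunP => k.
  by have := H k; rewrite negbK => /eqP.
by rewrite (bigD1 k) //= (negbTE hk) mul0r.
Qed.

Lemma EE_orth (x y : I) : \sum_i EE x i * Num.conj (EE y i) = (x == y)%:R.
Proof.
rewrite -prod_eq.
rewrite (eq_bigr (fun k => \sum_b P (x k) b * Num.conj (P (y k) b))); last first.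
  by move=> k _; rewrite U1E.
rewrite bigA_distr_bigA /=; apply: eq_bigr => i _.
by rewrite /EE rmorph_prod -big_split.
Qed.

Lemma tens_one (i j : I) :
  tens_op (fun _ : 'I_N.+1 => (1%:M : 'M[C]_D)) i j = (i == j)%:R.
Proof. by rewrite /tens_op; under eq_bigr do rewrite mxE; exact: prod_eq. Qed.

Lemma trace_one (rho : mop R N D) :
  trace_mul (tens_op (fun _ : 'I_N.+1 => (1%:M : 'M[C]_D))) rho = \sum_i rho i i.
Proof.
rewrite /trace_mul; apply: eq_bigr => i _.
under eq_bigr do rewrite tens_one.
rewrite (bigD1 i) //= big1 ?addr0 ?eqxx ?mul1r //.
by move=> j nji; rewrite eq_sym (negbTE nji) mul0r.
Qed.

Lemma qc_sum (rho : mop R N D) : \sum_x qc rho x = \sum_i rho i i.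
Proof.
rewrite -trace_one (@tens_expand _ (fun _ _ => 1)).
  by apply: eq_bigr => x _; rewrite prodr_const expr1n mul1r.
move=> k i j; rewrite mxE -U2E; apply: eq_bigr => a _; by rewrite mul1r.
Qed.

Lemma qc_ge0 (rho : mop R N D) x : density_op rho -> 0 <= qc rho x.
Proof.
case=> _ H _; have := H (fun i => Num.conj (EE x i)).
by under eq_bigr do under eq_bigr do rewrite conjCK.
Qed.

Lemma EE_swap s (x i : I) : EE (swapx s x) (swapx s i) = EE x i.
Proof.
rewrite /EE /swapx; under eq_bigr do rewrite !ffunE.
exact: (prod_perm s (fun k => P (x k) (i k))).
Qed.

Lemma qc_swap (rho : mop R N D) s x : perm_invariant rho -> qc rho (swapx s x) = qc rho x.
Proof.
move=> Hp; rewrite /qc (sum_swapx s); apply: eq_bigr => i _.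
rewrite (sum_swapx s); apply: eq_bigr => j _.
by rewrite !EE_swap /swapx Hp.
Qed.

Definition rho0 (x0 : I) : mop R N D := fun i j => Num.conj (EE x0 i) * EE x0 j.

Lemma qc_rho0 x0 x : qc (rho0 x0) x = (x == x0)%:R.
Proof.
transitivity ((\sum_i EE x i * Num.conj (EE x0 i)) * (\sum_j EE x0 j * Num.conj (EE x j))).
  rewrite /qc mulr_suml; apply: eq_bigr => i _.
  rewrite mulr_sumr; apply: eq_bigr => j _; rewrite /rho0; ring.
by rewrite !EE_orth eq_sym; case: (_ == _); rewrite ?mulr1 ?mulr0.
Qed.

Lemma rho0_density x0 : density_op (rho0 x0).
Proof.
split.
- by move=> i j; rewrite /rho0 rmorphM /= conjCK mulrC.
- move=> v.
  set S := \sum_j EE x0 j * v j.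
  have -> : \sum_i \sum_j Num.conj (v i) * rho0 x0 i j * v j = S * Num.conj S.
    rewrite mulrC /S rmorph_sum mulr_suml; apply: eq_bigr => i _.
    rewrite mulr_sumr; apply: eq_bigr => j _; rewrite rmorphM /rho0; ring.
  exact: mul_conjC_ge0.
- transitivity (\sum_i EE x0 i * Num.conj (EE x0 i)); last by rewrite EE_orth eqxx.
  by apply: eq_bigr => i _; rewrite /rho0 mulrC.
Qed.

Lemma rho0_perm (a0 : 'I_D) : perm_invariant (rho0 [ffun _ => a0]).
Proof.
move=> s i j; rewrite /rho0.
have E : forall i : I, EE [ffun _ => a0] [ffun k => i (s k)] = EE [ffun _ => a0] i.
  move=> i'; rewrite -[in RHS](EE_swap s); congr EE.
  by apply/ffunP => k; rewrite /swapx !ffunE.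
by rewrite !E.
Qed.

End Expand.
End Quantum.

Local Open Scope complex_scope.

Section Main.
Variable R : realType.
Local Notation C := (R[i]).
Variables (D N : nat) (Om : 'M[C]_D) (psi : 'cV[C]_D) (beta tau : R).
Hypothesis unitpsi : unit_vector psi.
Hypothesis vop : verification_op psi Om.
Hypothesis Hb : forall l : R[i], eigenvalue Om l -> l = 1 \/ l <= beta%:C.
Hypothesis Ht : forall l : R[i], eigenvalue Om l -> tau%:C <= l.

Let Pm := spectralmx Om.
Let dd := spectral_diag Om.

Lemma herm : hadj Om = Om.
Proof. by case: vop. Qed.

Lemma Om_normal : Om \is normalmx.
Proof. apply/normalmxP; change (Om *m hadj Om = hadj Om *m Om); by rewrite herm. Qed.

Lemma OmE0 : Om = hadj Pm *m diag_mx dd *m Pm.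
Proof.
have := orthomx_spectralP Om_normal; rewrite invmx_unitary ?spectral_unitarymx //.
Qed.

Lemma PU1 : Pm *m hadj Pm = 1%:M.
Proof. exact/unitarymxP/spectral_unitarymx. Qed.

Lemma PU2 : hadj Pm *m Pm = 1%:M.
Proof.
have := mulVmx (spectral_unit Om).
by rewrite invmx_unitary ?spectral_unitarymx.
Qed.

Lemma OmE i j : Om i j = \sum_a dd 0 a * (Num.conj (Pm a i) * Pm a j).
Proof.
rewrite {1}OmE0 mxE; apply: eq_bigr => a _.
rewrite mul_mx_diag mxE hadjE; ring.
Qed.

Lemma PO : Pm *m Om = diag_mx dd *m Pm.
Proof. by rewrite {1}OmE0 !mulmxA PU1 mul1mx. Qed.

Lemma row_neq0 a : row a Pm != 0.
Proof.
apply/negP => /eqP H.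
have := U1E PU1 a a; rewrite eqxx big1 => [/eqP|k _].
  by rewrite eq_sym oner_eq0.
have : row a Pm 0 k = 0 by rewrite H mxE.
by rewrite mxE => ->; rewrite mul0r.
Qed.

Lemma eig a : eigenvalue Om (dd 0 a).
Proof.
apply/eigenvalueP; exists (row a Pm); last exact: row_neq0.
rewrite -row_mul PO mul_diag_mx; apply/rowP => k; by rewrite !mxE.
Qed.

Definition dr a : R := @complex.Re R (dd 0 a).

Lemma ddE a : dd 0 a = real_complex R (dr a).
Proof.
have := Ht (eig a); rewrite lecE => /andP [/eqP H _].
rewrite /dr; case: (dd 0 a) H => x y /= ->; by [].
Qed.

Lemma dr_tau a : tau <= dr a.
Proof. by have := Ht (eig a); rewrite ddE lecR. Qed.

Definition zz := Pm *m psi.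

Lemma psi_z : psi = hadj Pm *m zz.
Proof. by rewrite /zz mulmxA PU2 mul1mx. Qed.

Lemma dz a : dd 0 a * zz a 0 = zz a 0.
Proof.
have : diag_mx dd *m zz = zz.
  by rewrite /zz mulmxA -PO -mulmxA; case: vop => _ _ _ -> _.
rewrite mul_diag_mx; move/matrixP => /(_ a 0); by rewrite mxE.
Qed.

Lemma z_neq0 : zz != 0.
Proof.
apply/negP => /eqP Z.
have : psi = 0 by rewrite psi_z Z mulmx0.
move=> P0; move: unitpsi; rewrite /unit_vector P0 mulmx0 mxE => /eqP.
by rewrite eq_sym oner_eq0.
Qed.

Lemma exists_a0 : exists a0, zz a0 0 != 0.
Proof.
have /matrix0Pn [a [j H]] := z_neq0.
by exists a; rewrite (ord1 j) in H.
Qed.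

Section A0.
Variable a0 : 'I_D.
Hypothesis za0 : zz a0 0 != 0.

Lemma dd_a0 : dd 0 a0 = 1.
Proof.
have := dz a0; move/eqP; rewrite -subr_eq0 -{2}[zz a0 0]mul1r -mulrBl mulf_eq0.
by rewrite (negbTE za0) orbF subr_eq0 => /eqP.
Qed.

Lemma dr_a0 : dr a0 = 1.
Proof. by rewrite /dr dd_a0. Qed.

Lemma a0_uniq a : dd 0 a = 1 -> a = a0.
Proof.
move=> Ha; apply/eqP; apply: contraT => na.
pose f := fun i : 'I_2 => if i == ord0 then a0 else a.
have iE : forall i : 'I_2, i = ord0 \/ i = ord_max.
  by case=> [[|[|m]] Hm]; [left|right|]; try apply/val_inj.
have f0 : f ord0 = a0 by rewrite /f eqxx.
have f1 : f ord_max = a by [].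
have finj : forall i j, (f i == f j) = (i == j).
  move=> i j; case: (iE i) => ->; case: (iE j) => ->; rewrite ?f0 ?f1 ?eqxx //.
    by rewrite eq_sym (negbTE na).
  by rewrite (negbTE na).
pose M := \matrix_(i < 2, k < D) Pm (f i) k.
have MO : M *m Om = 1 *: M.
  apply/matrixP => i k.
  transitivity ((Pm *m Om) (f i) k).
    by rewrite !mxE; apply: eq_bigr => l _; rewrite mxE.
  rewrite PO mul_diag_mx !mxE (_ : dd 0 (f i) = 1) ?mul1r //.
  by rewrite /f; case: ifP => _; [exact: dd_a0 | exact: Ha].
have Msub : (M <= eigenspace Om 1)%MS by apply/eigenspaceP.
have MM : M *m hadj M = 1%:M.
  apply/matrixP => i j; rewrite !mxE -finj -(U1E PU1).
  by apply: eq_bigr => k _; rewrite !mxE.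
have := mxrankS Msub; case: vop => _ _ _ _ ->.
have := mxrankM_maxl M (hadj M); rewrite MM mxrank1.
by move=> H1 H2; have := leq_trans H1 H2.
Qed.

Lemma z_other a : a != a0 -> zz a 0 = 0.
Proof.
move=> na; have := dz a; move/eqP; rewrite -subr_eq0 -{2}[zz a 0]mul1r -mulrBl mulf_eq0.
case/orP => [|/eqP //]; rewrite subr_eq0 => /eqP H.
by move: na; rewrite (a0_uniq H) eqxx.
Qed.

Lemma psi_entry i : psi i 0 = Num.conj (Pm a0 i) * zz a0 0.
Proof.
rewrite {1}psi_z mxE (bigD1 a0) //= big1 ?addr0 ?hadjE //.
by move=> a na; rewrite z_other // mulr0.
Qed.

Lemma zz_norm : Num.conj (zz a0 0) * zz a0 0 = 1.
Proof.
have := unitpsi; rewrite /unit_vector mxE => <-.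
transitivity (Num.conj (zz a0 0) * zz a0 0 * \sum_k Pm a0 k * Num.conj (Pm a0 k)).
  by rewrite (U1E PU1) eqxx mulr1.
rewrite mulr_sumr; apply: eq_bigr => k _.
rewrite hadjE psi_entry rmorphM /= conjCK; ring.
Qed.

Lemma psiE i j : (psi *m hadj psi) i j = \sum_a (a == a0)%:R * (Num.conj (Pm a i) * Pm a j).
Proof.
rewrite mxE big_ord1 hadjE !psi_entry (bigD1 a0) //= big1 ?addr0.
  rewrite eqxx mul1r rmorphM /= conjCK.
  transitivity (Num.conj (Pm a0 i) * Pm a0 j * (Num.conj (zz a0 0) * zz a0 0)); first by ring.
  by rewrite zz_norm mulr1.
by move=> a /negbTE ->; rewrite mul0r.
Qed.

Lemma dbad a : a != a0 -> tau <= dr a /\ dr a <= beta.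
Proof.
move=> na; split; first exact: dr_tau.
case: (Hb (eig a)) => [H|]; first by move: na; rewrite (a0_uniq H) eqxx.
by rewrite ddE lecR.
Qed.

Lemma Re_sumC (I : finType) (F : I -> C) (G : I -> R) :
  (forall x, F x = real_complex R (G x)) -> @complex.Re R (\sum_x F x) = \sum_x G x.
Proof. by move=> H; under eq_bigr do rewrite H; rewrite -rmorph_sum. Qed.

Definition qr (rho : mop R N D) (x : idx N D) : R := @complex.Re R (qc Pm rho x).

Lemma qc_real rho x : density_op rho -> qc Pm rho x = real_complex R (qr rho x).
Proof.
move=> Hd; have := ger0_Im (qc_ge0 Pm x Hd).
by rewrite /qr; case: (qc Pm rho x) => u v /= ->.
Qed.

Lemma W_real (g : 'I_D -> R) (gc : 'I_D -> C) (x : idx N D) :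
  (forall a, gc a = real_complex R (g a)) ->
  \prod_(k < N.+1) (if (k < N)%N then dd 0 (x k) else gc (x k)) = real_complex R (Wg dr g x).
Proof.
move=> Hg; rewrite /Wg rmorph_prod; apply: eq_bigr => k _.
by case: ifP => _; rewrite ?ddE ?Hg.
Qed.

Lemma p_formula rho : density_op rho -> p_of Om rho = Pv (qr rho) dr.
Proof.
move=> Hd; rewrite /p_of /OmN_id.
rewrite (@tens_expand _ _ Pm _ _ (fun k a => if (k < N)%N then dd 0 a else 1)); last first.
  move=> k i j; case: ifP => _; first exact: OmE.
  by rewrite mxE -(U2E PU2); apply: eq_bigr => a _; rewrite mul1r.
apply: Re_sumC => x.
rewrite (@W_real (fun _ => 1) (fun _ => 1)) // qc_real //.
by rewrite -rmorphM mulrC.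
Qed.

Lemma f_formula rho : density_op rho -> f_of Om psi rho = Fv (qr rho) dr a0.
Proof.
move=> Hd; rewrite /f_of /OmN_psi.
rewrite (@tens_expand _ _ Pm _ _ (fun k a => if (k < N)%N then dd 0 a else (a == a0)%:R)); last first.
  move=> k i j; case: ifP => _; first exact: OmE.
  exact: psiE.
apply: Re_sumC => x.
rewrite (@W_real (fun a => (a == a0)%:R) (fun a => (a == a0)%:R)) ?qc_real //.
  by rewrite -rmorphM mulrC.
by move=> a; case: (a == a0).
Qed.

End A0.
End Main.

Theorem lemma9 (R : realType) (D N : nat) (delta f : R)
  (Om : 'M[R[i]]_D) (psi : 'cV[R[i]]_D) (beta tau : R) :
  (2 <= D)%N -> (1 <= N)%N ->
  0 < delta -> delta <= 1 -> 0 < f -> f <= 1 ->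
  unit_vector psi -> verification_op psi Om -> posdef Om ->
  (* beta is the second largest eigenvalue (eigenvalue 1 is the largest, simple) *)
  eigenvalue Om beta%:C -> beta%:C != 1 ->
  (forall l : R[i], eigenvalue Om l -> l = 1 \/ l <= beta%:C) ->
  (* tau is the smallest eigenvalue *)
  eigenvalue Om tau%:C ->
  (forall l : R[i], eigenvalue Om l -> tau%:C <= l) ->
  0 < tau -> tau <= beta -> beta < 1 ->
  let h := (Order.min (beta * ln beta^-1) (tau * ln tau^-1))^-1 in
  Fdelta N delta Om psi >=
    (N%:R + 1 - (ln beta)^-1 * ln (tau * delta)) /
    (N%:R + 1 - (ln beta)^-1 * ln (tau * delta) - h * ln (tau * delta))
  /\
  Ffid N f Om psi >=
    (N%:R + 1 - (ln beta)^-1 * ln f) /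
    (N%:R + 1 - (ln beta)^-1 * ln f - h * ln f).
Proof.
move=> _ _ dl0 dl1 f0 f1 up vop _ _ _ Hb _ Ht tau0 tb b1 h.
have [a0 za0] := exists_a0 Om up.
have -> : h = hh tau beta by [].
have -> : (N%:R + 1 : R) = MR R N by rewrite /MR natr1.
set x0 : idx N D := [ffun _ => a0].
set r0 := rho0 (spectralmx Om) x0.
have r0d : density_op r0 by apply: rho0_density; exact: PU1.
have r0p : perm_invariant r0 by apply: rho0_perm.
have qr0 : forall x, qr Om r0 x = (x == x0)%:R.
  move=> x; rewrite /qr qc_rho0 ?PU1 //; by case: (x == x0).
have W0 : forall g, g a0 = 1 -> Wg (dr Om) g x0 = 1.
  move=> g g1; rewrite /Wg big1 // => k _; rewrite /x0 ffunE.
  by case: ifP => _; rewrite ?(dr_a0 vop za0).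
have S0 : forall g, \sum_x qr Om r0 x * Wg (dr Om) g x = Wg (dr Om) g x0.
  move=> g; rewrite (bigD1 x0) //= qr0 eqxx mul1r big1 ?addr0 //.
  by move=> x /negbTE nx; rewrite qr0 nx mul0r.
have p0 : p_of Om r0 = 1 by rewrite (p_formula vop Ht r0d) /Pv S0 W0.
have fr0 : f_of Om psi r0 = 1.
  by rewrite (f_formula up vop Ht za0 r0d) /Fv S0 W0 // eqxx.
have CL : forall rho : mop R N D, density_op rho -> perm_invariant rho ->
   [/\ (forall x, 0 <= qr Om rho x), \sum_x qr Om rho x = 1 &
       (forall s x, qr Om rho (swapx s x) = qr Om rho x)].
  move=> rho Hd Hp; split.
  - by move=> x; rewrite -ler0c -qc_real // qc_ge0.
  - rewrite -(Re_sumC (F := qc (spectralmx Om) rho)); last by move=> x; rewrite qc_real.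
    by rewrite (qc_sum (PU2 Om)); case: Hd => _ _ ->.
  - by move=> s x; rewrite /qr qc_swap.
have dbad' := dbad vop Hb Ht za0.
have d0 := dr_a0 vop za0.
split.
- apply: lb_le_inf.
    exists (f_of Om psi r0 / p_of Om r0); exists r0; split => //.
    by rewrite p0.
  move=> r [rho [Hd Hp Hdl ->]].
  have [q0 qs qsym] := CL rho Hd Hp.
  rewrite (p_formula vop Ht Hd) (f_formula up vop Ht za0 Hd).
  rewrite (p_formula vop Ht Hd) in Hdl.
  apply: (classical_bound q0 qs qsym d0 dbad' tau0 tb b1).
    by rewrite mulr_gt0.
  apply: le_trans (Pv_le q0 qsym d0 dbad' tau0 tb b1).
  by rewrite ler_wpM2l // ltW.
- apply: lb_le_inf.
    exists (f_of Om psi r0 / p_of Om r0); exists r0; split => //.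
    by rewrite fr0.
  move=> r [rho [Hd Hp Hdl ->]].
  have [q0 qs qsym] := CL rho Hd Hp.
  rewrite (p_formula vop Ht Hd) (f_formula up vop Ht za0 Hd).
  rewrite (f_formula up vop Ht za0 Hd) in Hdl.
  apply: (classical_bound q0 qs qsym d0 dbad' tau0 tb b1) => //.
  apply: le_trans Hdl _.
  exact: (Fv_le q0 qsym d0 dbad' tau0).
Qed.
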